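(* Let $\varepsilon>0$, $0\le\tau\le\varepsilon$, $\lambda:=\tau/\varepsilon$, and define on $\mathcal V_{[0,1]}$ \[ H(u):= \lambda\langle u,\mathbf{1}-u\rangle_{\mathcal V} +\left\langle u,\left(I-e^{-\tau\Delta}\right)u\right\rangle_{\mathcal V}. \] Then $H(u)\ge0$ for all $u\in\mathcal V_{[0,1]}$. Moreover, if $u_0\in\mathcal V_{[0,1]}$ and $(u_n)_{n\ge0}$, together with some $\beta_{n+1}\in\mathcal B(u_{n+1})$, satisfies for each $n$ \[ u_{n+1} -e^{-\tau\Delta}u_n-\lambda u_{n+1}+\lambda\overline{u_{n+1}}\mathbf{1} =\lambda\beta_{n+1} -\lambda\overline{\beta_{n+1}}\mathbf{1}, \] then $H(u_{n+1})\le H(u_n)$ with equality if and only if $u_{n+1}=u_n$, and \[ H(u_n)-H(u_{n+1}) \geq (1-\lambda)\|u_{n+1}-u_n\|^2_{\mathcal V}. \]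
   Context: $G=(V,E)$ is a finite, simple, connected, undirected graph with weights $\omega_{ij}=\omega_{ji}>0$ for $ij\in E$, $\omega_{ij}=0$ otherwise; $d_i=\sum_j\omega_{ij}$, $r\in[0,1]$ fixed. $\mathcal V$ = functions $V\to\mathbb R$ with $\langle u,v\rangle_{\mathcal V}=\sum_i u_iv_id_i^r$ and norm $\|\cdot\|_{\mathcal V}$; $\mathcal V_{[0,1]}$ = functions $V\to[0,1]$. $(\Delta u)_i=d_i^{-r}\sum_j\omega_{ij}(u_i-u_j)$, $e^{-\tau\Delta}$ its matrix exponential. $\mathbf 1$ all-ones; $\mathcal M(u)=\langle u,\mathbf 1\rangle_{\mathcal V}$; $\bar v=\mathcal M(v)/\mathcal M(\mathbf 1)$. For $u\in\mathcal V_{[0,1]}$, $\mathcal B(u)$ = set of $\beta\in\mathcal V$ with $\beta_i\ge0$ if $u_i=0$, $\beta_i=0$ if $0<u_i<1$, $\beta_i\le0$ if $u_i=1$; $\mathcal B(u)=\emptyset$ otherwise. *)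

(* Defs.v *)
From HB Require Import structures.
From mathcomp Require Import all_boot all_order all_algebra.
From mathcomp Require Import all_classical all_reals all_analysis.
Set Implicit Arguments. Unset Strict Implicit. Unset Printing Implicit Defensive.
Import Order.TTheory GRing.Theory Num.Theory.
Local Open Scope ring_scope.

Section GraphDefs.
Variables (R : realType) (n : nat).
Implicit Types (w : 'I_n -> 'I_n -> R) (u v : 'I_n -> R) (A : 'M[R]_n).

Definition weighted_graph w : Prop :=
  [/\ forall i j, w i j = w j i, forall i j, 0 <= w i j, forall i, w i i = 0
    & forall i j, connect [rel a b | 0 < w a b] i j].

Definition deg w (i : 'I_n) : R := \sum_(j < n) w i j.

(* graph Laplacian (Delta u)_i = d_i^{-r} sum_j w_ij (u_i - u_j), as a matrix *)
Definition laplacian w (r : R) : 'M[R]_n :=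
  \matrix_(i, j) ((deg w i `^ r)^-1 * ((i == j)%:R * deg w i - w i j)).

Definition mpow A (k : nat) : 'M[R]_n := iter k (mulmx A) 1%:M.
Definition expm A : 'M[R]_n :=
  \matrix_(i, j) limn (fun N : nat => \sum_(k < N) (mpow A k) i j / (k`!)%:R).

Definition matvec A u : 'I_n -> R := fun i => \sum_(j < n) A i j * u j.

Definition ipV w (r : R) u v : R := \sum_(i < n) u i * v i * deg w i `^ r.
Definition normV2 w (r : R) u : R := ipV w r u u.

Definition one_fn : 'I_n -> R := fun _ => 1.
Definition massV w r u : R := ipV w r u one_fn.
Definition meanV w r v : R := massV w r v / massV w r one_fn.

Definition in01 u : Prop := forall i, 0 <= u i <= 1.

(* beta \in B(u); B(u) is empty unless u \in V_[0,1] *)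
Definition inB u (beta : 'I_n -> R) : Prop :=
  in01 u /\ forall i, [/\ u i = 0 -> 0 <= beta i,
                          0 < u i < 1 -> beta i = 0 & u i = 1 -> beta i <= 0].

Definition Hfun w r (lam tau : R) u : R :=
  lam * ipV w r u (fun i => 1 - u i)
  + ipV w r u (fun i => u i - matvec (expm (- tau *: laplacian w r)) u i).

End GraphDefs.

(* Main.v *)
Require Import Defs.
From HB Require Import structures.
From mathcomp Require Import all_boot all_order all_algebra.
From mathcomp Require Import all_classical all_reals all_analysis.
From mathcomp Require Import ring lra.

Set Implicit Arguments. Unset Strict Implicit. Unset Printing Implicit Defensive.
Import Order.TTheory GRing.Theory Num.Theory.
Local Open Scope ring_scope.
Local Open Scope classical_set_scope.
Import numFieldNormedType.Exports.
Lemma tri (V : zmodType) (f : nat -> nat -> V) N :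
  \sum_(k < N) \sum_(i < k.+1) f (k - i)%N i =
  \sum_(a < N) \sum_(b < N | (a + b < N)%N) f a b.
Proof.
elim: N => [|N IH]; first by rewrite !big_ord0.
rewrite big_ord_recr /= IH.
have -> : \sum_(a < N.+1) \sum_(b < N.+1 | (a + b < N.+1)%N) f a b =
  \sum_(a < N.+1) \sum_(b < N.+1) ((if (a + b < N)%N then f a b else 0)
     + (if (a + b == N)%N then f a b else 0)).
  apply: eq_bigr => a _; rewrite big_mkcond; apply: eq_bigr => b _.
  rewrite ltnS leq_eqVlt; by case: ltngtP => _; rewrite /= ?addr0 ?add0r.
under [RHS]eq_bigr => a _ do rewrite big_split.
rewrite big_split /=; congr (_ + _).
  rewrite [RHS]big_ord_recr /= [X in _ + X]big1 ?addr0; last first.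
    by move=> b _; rewrite ltnNge leq_addr.
  apply: eq_bigr => a _; rewrite [RHS]big_ord_recr /= ltnNge leq_addl addr0.
  by rewrite big_mkcond.
rewrite (reindex_inj rev_ord_inj) /=; apply: eq_bigr => i _.
have iN : (N - i < N.+1)%N by rewrite ltnS leq_subr.
rewrite (bigD1 (Ordinal iN)) //= big1 ?addr0.
  have iN' : (i <= N)%N by rewrite -ltnS.
  by rewrite subSS subnKC // eqxx subKn.
move=> b; rewrite -val_eqE /= => neb.
case: ifP => // /eqP E; have Eb : (N - i)%N = b by move: E => /(congr1 (fun x => (x - i)%N)); rewrite addKn.
by rewrite Eb eqxx in neb.

Qed.

Section ES.
Variables (R : realType) (A : algType R).
Definition es N (x : A) : A := \sum_(k < N) (k`!%:R)^-1 *: x ^+ k.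

Lemma fact_coef (k i : nat) : (i <= k)%N ->
  (k`!%:R : R)^-1 * 'C(k, i)%:R = ((k - i)`!%:R)^-1 * (i`!%:R)^-1.
Proof.
move=> ik; rewrite -(bin_fact ik) !natrM.
have h1 : (i`!%:R : R) != 0 by rewrite pnatr_eq0 -lt0n fact_gt0.
have h2 : ((k - i)`!%:R : R) != 0 by rewrite pnatr_eq0 -lt0n fact_gt0.
have h3 : ('C(k, i)%:R : R) != 0 by rewrite pnatr_eq0 -lt0n bin_gt0.
by field; rewrite ?h1 ?h2 ?h3.
Qed.

Lemma es_mul N x y : GRing.comm x y ->
  es N x * es N y - es N (x + y) =
  \sum_(a < N) \sum_(b < N | (N <= a + b)%N)
     (((a`!%:R)^-1 * (b`!%:R)^-1) *: (x ^+ a * y ^+ b)).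
Proof.
move=> cxy.
have E1 : es N x * es N y = \sum_(a < N) \sum_(b < N)
     (((a`!%:R)^-1 * (b`!%:R)^-1) *: (x ^+ a * y ^+ b)).
  rewrite /es mulr_suml; apply: eq_bigr => a _; rewrite mulr_sumr.
  by apply: eq_bigr => b _; rewrite -scalerAl -scalerAr scalerA.
have E2 : es N (x + y) = \sum_(a < N) \sum_(b < N | (a + b < N)%N)
     (((a`!%:R)^-1 * (b`!%:R)^-1) *: (x ^+ a * y ^+ b)).
  rewrite /es -(tri (fun a b => ((a`!%:R)^-1 * (b`!%:R)^-1) *: (x ^+ a * y ^+ b))).
  apply: eq_bigr => k _; rewrite exprDn_comm // scaler_sumr.
  apply: eq_bigr => i _; rewrite -(@scaler_nat R A) scalerA fact_coef //.
  by rewrite -ltnS.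
rewrite E1 E2 -sumrB; apply: eq_bigr => a _.
rewrite (bigID (fun b : 'I_N => (N <= a + b)%N)) /=.
under [X in _ + X - _]eq_bigl => b do rewrite -ltnNge.
by rewrite addrK.
Qed.
End ES.
Section Mat.
Variables (R : realType) (m : nat).
Local Notation M := 'M[R]_m.+1.
Implicit Types A B : M.
Definition nu (A : M) : R := \sum_i \sum_j `|A i j|.

Lemma nu_ge0 A : 0 <= nu A.
Proof. by apply: sumr_ge0 => i _; apply: sumr_ge0 => j _. Qed.

Lemma row_le_nu A i : \sum_j `|A i j| <= nu A.
Proof.
rewrite /nu [X in _ <= X](bigD1 i) //= lerDl; apply: sumr_ge0 => k _.
by apply: sumr_ge0 => j _.
Qed.

Lemma entry_le_nu A i j : `|A i j| <= nu A.
Proof.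
apply: le_trans _ (row_le_nu A i).
by rewrite (bigD1 j) //= lerDl; apply: sumr_ge0 => k _.
Qed.

Lemma nuD A B : nu (A + B) <= nu A + nu B.
Proof.
rewrite /nu -big_split; apply: ler_sum => i _; rewrite -big_split.
by apply: ler_sum => j _; rewrite mxE ler_normD.
Qed.

Lemma nuZ c A : nu (c *: A) = `|c| * nu A.
Proof.
rewrite /nu mulr_sumr; apply: eq_bigr => i _; rewrite mulr_sumr.
by apply: eq_bigr => j _; rewrite mxE normrM.
Qed.

Lemma nu0 : nu 0 = 0.
Proof. by rewrite /nu big1 // => i _; rewrite big1 // => j _; rewrite mxE normr0. Qed.

Lemma nu_sum (I : Type) (r : seq I) (P : pred I) (F : I -> M) :
  nu (\sum_(i <- r | P i) F i) <= \sum_(i <- r | P i) nu (F i).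
Proof.
elim/big_rec2: _ => [|i y1 y2 _ h]; first by rewrite nu0.
by apply: le_trans (nuD _ _) _; rewrite lerD2l.
Qed.

Lemma nuM A B : nu (A *m B) <= nu A * nu B.
Proof.
rewrite /nu mulr_suml; apply: ler_sum => i _.
apply: le_trans (_ : \sum_j \sum_l `|A i l| * `|B l j| <= _).
  by apply: ler_sum => j _; rewrite mxE; apply: le_trans (ler_norm_sum _ _ _) _;
    apply: ler_sum => l _; rewrite normrM.
rewrite exchange_big /= mulr_suml; apply: ler_sum => l _.
by rewrite -mulr_sumr ler_wpM2l // row_le_nu.
Qed.

Lemma nuX A k : nu (A ^+ k) <= nu 1 * nu A ^+ k.
Proof.
elim: k => [|k IH]; first by rewrite expr0 expr0 mulr1.
rewrite exprSr -mulmxE; apply: le_trans (nuM _ _) _.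
by rewrite exprSr mulrA ler_wpM2r // nu_ge0.
Qed.


Lemma cvg_sumI (I : finType) (f : I -> nat -> R) (l : I -> R) :
  (forall i, f i n @[n --> \oo] --> l i) ->
  (\sum_i f i n) @[n --> \oo] --> \sum_i l i.
Proof. by move=> h; apply: cvg_big => //; exact: add_continuous. Qed.

Lemma es_entry N A i j : es N A i j = \sum_(k < N) (k`!%:R)^-1 * (A ^+ k) i j.
Proof. by rewrite /es summxE; apply: eq_bigr => k _; rewrite mxE. Qed.

Lemma cvg_es A i j : cvgn (fun N => es N A i j).
Proof.
pose g k := (k`!%:R)^-1 * (A ^+ k) i j.
have -> : (fun N => es N A i j) = series g.
  by apply/funext => N; rewrite es_entry /series /= big_mkord.
apply: normed_cvg.
apply: (@series_le_cvg _ _ (fun k => nu 1 * exp_coeff (nu A) k)).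
- by move=> k; rewrite /=.
- by move=> k; apply: mulr_ge0; [exact: nu_ge0 | apply: exp_coeff_ge0; exact: nu_ge0].
- move=> k; rewrite /g /exp_coeff /= normrM ger0_norm ?invr_ge0 ?ler0n //.
  rewrite mulrCA mulrA [_ * _^-1]mulrC ler_wpM2l ?invr_ge0 ?ler0n //.
  by rewrite mulrC; exact: le_trans (entry_le_nu _ i j) (nuX _ _).
exact/is_cvg_seriesZ/is_cvg_series_exp_coeff.
Qed.

Definition Em A : M := \matrix_(i, j) limn (fun N => es N A i j).

Lemma Em_cvg A i j : (fun N => es N A i j) @ \oo --> Em A i j.
Proof. by rewrite mxE; exact: cvg_es. Qed.


Lemma es_R (p : R) N : (es N (p : R^o) : R) = series (exp_coeff p) N.
Proof.
rewrite /es /series /= big_mkord; apply: eq_bigr => k _.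
by rewrite /exp_coeff /= mulrC.
Qed.

Lemma es_R_cvg (p : R) : (fun N => (es N (p : R^o) : R)) @ \oo --> expR p.
Proof.
have -> : (fun N => (es N (p : R^o) : R)) = series (exp_coeff p).
  by apply/funext => N; exact: es_R.
exact: is_cvg_series_exp_coeff.
Qed.

Lemma mxB_entry (A B : M) i j : (A - B) i j = A i j - B i j.
Proof. by rewrite !mxE. Qed.

Lemma mulE_entry (A B : M) i j : (A * B) i j = \sum_l A i l * B l j.
Proof. by change ((A *m B) i j = \sum_l A i l * B l j); rewrite mxE. Qed.

Lemma Em_add P Q : P *m Q = Q *m P -> Em (P + Q) = Em P *m Em Q.
Proof.
move=> cPQ; apply/matrixP => i j.
pose p := nu P; pose q := nu Q; pose c := nu (1 : M).
pose s N : R := (es N (p : R^o) : R) * (es N (q : R^o) : R) - (es N ((p + q) : R^o) : R).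
have s0 : s @ \oo --> (0:R).
  have -> : (0:R) = expR p * expR q - expR (p + q) by rewrite expRD subrr.
  apply: cvgB; [apply: cvgM; exact: es_R_cvg | exact: es_R_cvg].
have bound : forall N, `|(es N P * es N Q - es N (P + Q)) i j| <= c ^+ 2 * s N.
  move=> N; rewrite /s es_mul; last exact: cPQ.
  rewrite (@es_mul R R^o N p q); last by rewrite /GRing.comm mulrC.
  apply: le_trans (entry_le_nu _ i j) _.
  apply: le_trans (nu_sum _ _ _) _; rewrite mulr_sumr; apply: ler_sum => a _.
  apply: le_trans (nu_sum _ _ _) _; rewrite mulr_sumr; apply: ler_sum => b _.
  have C0 : 0 <= ((a`!%:R)^-1 * (b`!%:R)^-1 : R) by rewrite mulr_ge0 // invr_ge0 ler0n.
  rewrite nuZ ger0_norm //.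
  have -> : (((a`!%:R)^-1 * (b`!%:R)^-1) *: ((p : R^o) ^+ a * (q : R^o) ^+ b) : R^o)
     = ((a`!%:R)^-1 * (b`!%:R)^-1) * (p ^+ a * q ^+ b) by [].
  rewrite mulrCA ler_wpM2l //.
  apply: le_trans (_ : nu (P ^+ a) * nu (Q ^+ b) <= _).
    exact: nuM.
  have h1 := nuX P a; have h2 := nuX Q b.
  rewrite expr2 mulrACA; apply: ler_pM => //; exact: nu_ge0.
have d0 : (fun N => (es N P * es N Q - es N (P + Q)) i j) @ \oo --> (0:R).
  apply: (@squeeze_cvgr _ _ _ _ (fun N => - (c ^+ 2 * s N)) (fun N => c ^+ 2 * s N)).
  - by near=> N; have := bound N; rewrite ler_norml.
  - rewrite -oppr0 -(mulr0 (c ^+ 2)); apply: cvgN; apply: cvgM; [exact: cvg_cst | exact: s0].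
  - rewrite -(mulr0 (c ^+ 2)); apply: cvgM; [exact: cvg_cst | exact: s0].
have hm : (fun N => (es N P * es N Q) i j) @ \oo --> (Em P *m Em Q) i j.
  under eq_cvg do rewrite mulE_entry.
  rewrite mxE; apply: cvg_sumI => l; apply: cvgM; exact: Em_cvg.
rewrite mxE; apply: (cvg_lim (@Rhausdorff R)).
have -> : (fun N => es N (P + Q) i j) =
   (fun N => (es N P * es N Q) i j - (es N P * es N Q - es N (P + Q)) i j).
  by apply/funext => N; rewrite mxB_entry; ring.
rewrite -[X in _ --> X]subr0; exact: cvgB hm d0.
Unshelve. all: by end_near.
Qed.


Lemma cvg_eq_near (f : nat -> R) (a b : R) :
  f n @[n --> \oo] --> a -> (\forall N \near \oo, f N = b) -> a = b.
Proof.
move=> h hb; rewrite -(cvg_lim (@Rhausdorff R) h).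
exact: (cvg_lim (@Rhausdorff R) (cvg_near_cst _ hb)).
Qed.

Lemma cvg_eq2 (f : nat -> R) (a b : R) : f n @[n --> \oo] --> a -> f n @[n --> \oo] --> b -> a = b.
Proof.
move=> ha hb; rewrite -(cvg_lim (@Rhausdorff R) ha).
exact: (cvg_lim (@Rhausdorff R) hb).
Qed.

Lemma Em_lim A B : (forall i j, (fun N => es N A i j) @ \oo --> B i j) -> Em A = B.
Proof.
move=> h; apply/matrixP => i j; exact: cvg_eq2 (@Em_cvg A i j) (h i j).
Qed.

Lemma es0 N : es N.+1 (0 : M) = 1.
Proof.
rewrite /es big_ord_recl /= expr0 big1 ?addr0; first by rewrite invr1 scale1r.
by move=> k _; rewrite expr0n /= scaler0.
Qed.

Lemma Em0 : Em 0 = 1.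
Proof.
apply: Em_lim => i j; apply: cvg_near_cst; near=> N.
have [k ->] : exists k, N = k.+1 by exists N.-1; rewrite prednK //; near: N; exists 1%N.
by rewrite es0.
Unshelve. all: by end_near.
Qed.

Lemma scalar_mxX (c : R) k : (c%:M : M) ^+ k = (c ^+ k)%:M.
Proof.
elim: k => [|k IH]; first by rewrite !expr0.
by rewrite !exprS IH scalar_mxM.
Qed.

Lemma es_scalar (c : R) N : es N (c%:M : M) = (es N (c : R^o) : R)%:M.
Proof.
rewrite /es raddf_sum; apply: eq_bigr => k _.
by rewrite scalar_mxX scale_scalar_mx.
Qed.

Lemma Em_scalar (c : R) : Em (c%:M) = (expR c)%:M.
Proof.
apply: Em_lim => i j.
have -> : (fun N => es N (c%:M : M) i j) = (fun N => series (exp_coeff c) N * (i == j)%:R).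
  by apply/funext => N; rewrite es_scalar mxE mulr_natr es_R.
rewrite mxE -[X in _ --> X]mulr_natr; apply: cvgMr_tmp; exact: is_cvg_series_exp_coeff.
Qed.

Lemma nonneg_Em A : (forall i j, 0 <= A i j) -> forall i j, 0 <= Em A i j.
Proof.
move=> h.
have hX : forall k i j, 0 <= (A ^+ k) i j.
  elim=> [|k IH] i j; first by rewrite expr0 mxE ler0n.
  rewrite exprSr mulE_entry; apply: sumr_ge0 => l _; exact: mulr_ge0.
move=> i j; rewrite mxE; apply: limr_ge; first exact: cvg_es.
apply: nearW => N; rewrite es_entry; apply: sumr_ge0 => k _.
by apply: mulr_ge0; rewrite ?invr_ge0 ?ler0n.
Qed.

Section Sym.
Variable d : 'I_m.+1 -> R.
Definition symd A := forall i j, d i * A i j = d j * A j i.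

Lemma symdX A k : symd A -> symd (A ^+ k).
Proof.
move=> sA; elim: k => [|k IH] i j.
  rewrite expr0 !mxE; have [->|ne] := eqVneq i j; first by [].
  by rewrite !mulr0n !mulr0.
rewrite [in LHS]exprSr [in RHS]exprS !mulE_entry !mulr_sumr.
apply: eq_bigr => l _.
by rewrite mulrA IH -mulrA mulrCA sA mulrCA [X in d j * X]mulrC.
Qed.

Lemma symd_Em A : symd A -> symd (Em A).
Proof.
move=> sA i j.
have h1 : (fun N => d i * es N A i j) @ \oo --> d i * Em A i j.
  by apply: cvgMl_tmp; exact: Em_cvg.
have h2 : (fun N => d j * es N A j i) @ \oo --> d j * Em A j i.
  by apply: cvgMl_tmp; exact: Em_cvg.
have e : (fun N => d i * es N A i j) = (fun N => d j * es N A j i).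
  apply/funext => N /=; rewrite !es_entry !mulr_sumr; apply: eq_bigr => k _.
  by rewrite mulrCA symdX // mulrCA.
rewrite e in h1; exact: cvg_eq2 h1 h2.
Qed.
End Sym.

Lemma rowsum_Em A : (forall i, \sum_j A i j = 0) -> forall i, \sum_j Em A i j = 1.
Proof.
move=> h i.
have hX : forall k, \sum_j (A ^+ k.+1) i j = 0.
  move=> k; under eq_bigr do rewrite exprSr mulE_entry.
  rewrite exchange_big /=; apply: big1 => l _; by rewrite -mulr_sumr h mulr0.
have h1 := cvg_sumI (fun j => @Em_cvg A i j).
apply: cvg_eq_near h1 _; near=> N.
have [k ->] : exists k, N = k.+1 by exists N.-1; rewrite prednK //; near: N; exists 1%N.
under eq_bigr do rewrite es_entry.
rewrite exchange_big /= big_ord_recl /= [X in _ + X]big1 ?addr0; last first.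
  by move=> l _; rewrite -mulr_sumr /bump /= add1n hX mulr0.
rewrite -mulr_sumr (bigD1 i) //= big1 ?addr0.
  by rewrite expr0 mxE eqxx fact0 invr1 mul1r.
by move=> j /negPf ji; rewrite expr0 mxE eq_sym ji.
Unshelve. all: by end_near.
Qed.

End Mat.

Section IP.
Variables (R : realType) (m : nat) (dl : 'I_m.+1 -> R).
Hypothesis dlpos : forall i, 0 < dl i.
Local Notation M := 'M[R]_m.+1.
Implicit Types A : M.
Definition mv (A : M) (u : 'I_m.+1 -> R) i := \sum_j A i j * u j.
Definition ip (u v : 'I_m.+1 -> R) := \sum_i u i * v i * dl i.

Lemma ip_expand A u v : ip u (mv A v) = \sum_i \sum_j u i * v j * (dl i * A i j).
Proof.
apply: eq_bigr => i _; rewrite /mv mulr_sumr mulr_suml; apply: eq_bigr => j _.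
by rewrite mulrA; ring.
Qed.

Lemma ip_selfadj A u v : symd dl A -> ip u (mv A v) = ip (mv A u) v.
Proof.
move=> sA; rewrite ip_expand exchange_big /=; apply: eq_bigr => j _.
rewrite /mv !mulr_suml; apply: eq_bigr => i _.
by rewrite sA; ring.
Qed.

Lemma mv_one A : (forall i, \sum_j A i j = 1) -> mv A (fun=> 1) = (fun=> 1).
Proof. by move=> h; apply/funext => i; rewrite /mv; under eq_bigr do rewrite mulr1. Qed.

Lemma ip_mass A v : symd dl A -> (forall i, \sum_j A i j = 1) ->
  ip (fun=> 1) (mv A v) = ip (fun=> 1) v.
Proof. by move=> sA h; rewrite ip_selfadj // mv_one. Qed.

Lemma ip_le A u : symd dl A -> (forall i, \sum_j A i j = 1) ->
  (forall i j, 0 <= A i j) -> ip u (mv A u) <= ip u u.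
Proof.
move=> sA h nn.
have e2 : ip u u = \sum_i \sum_j u i ^+ 2 * (dl i * A i j).
  apply: eq_bigr => i _; rewrite -mulr_sumr -mulr_sumr h; ring.
have e3 : ip u u = \sum_i \sum_j u j ^+ 2 * (dl i * A i j).
  rewrite exchange_big /=; apply: eq_bigr => j _.
  under eq_bigr do rewrite sA.
  by rewrite -mulr_sumr -mulr_sumr h; ring.
have : 2 * ip u (mv A u) <= ip u u + ip u u.
  rewrite {1}e2 e3 ip_expand mulr_sumr -big_split /=; apply: ler_sum => i _.
  rewrite mulr_sumr -big_split /=; apply: ler_sum => j _.
  have k0 : 0 <= dl i * A i j by rewrite mulr_ge0 // ltW.
  have := sqr_ge0 (u i - u j); nra.
lra.
Qed.

Lemma ip_ge0 u : 0 <= ip u u.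
Proof. by apply: sumr_ge0 => i _; rewrite -expr2 mulr_ge0 ?sqr_ge0 // ltW. Qed.

Lemma ip_eq0 u : ip u u = 0 -> u = (fun=> 0).
Proof.
move=> h; apply/funext => i.
have hi : forall k, 0 <= u k * u k * dl k by move=> k; rewrite -expr2 mulr_ge0 ?sqr_ge0 // ltW.
have := psumr_eq0P (fun k _ => hi k) h.
move=> /(_ i isT).
move=> /eqP; rewrite mulf_eq0 (gt_eqF (dlpos i)) orbF.
by rewrite mulf_eq0 orbb => /eqP.
Qed.

Lemma mvM (P Q : M) u : mv (P *m Q) u = mv P (mv Q u).
Proof.
apply/funext => i; rewrite /mv.
under eq_bigr do rewrite mxE mulr_suml.
rewrite exchange_big /=; apply: eq_bigr => l _; rewrite mulr_sumr.
by apply: eq_bigr => j _; rewrite mulrA.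
Qed.

Lemma mv1 u : mv (1 : M) u = u.
Proof.
apply/funext => i; rewrite /mv (bigD1 i) //= big1 ?addr0.
  by rewrite mxE eqxx mul1r.
by move=> j /negPf ji; rewrite mxE eq_sym ji mul0r.
Qed.

End IP.

Section Graph.
Variables (R : realType) (m : nat) (w : 'I_m.+1 -> 'I_m.+1 -> R) (r : R).

Lemma deg_gt0 : (0 < m)%N -> weighted_graph w -> forall i, 0 < deg w i.
Proof.
move=> m0 [wsym wge0 wdiag conn] i.
have [j ji] : exists j : 'I_m.+1, j != i.
  case: (eqVneq i ord0) => [->|ne]; last by exists ord0; rewrite eq_sym.
  by exists ord_max; rewrite -val_eqE /= -lt0n.
have := conn i j; case/connectP => p.
case: p => [/= _ hl|a p /= /andP[hia _] _]; first by rewrite -hl eqxx in ji.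
rewrite /deg (bigD1 a) //=; apply: (lt_le_trans hia); rewrite lerDl.
by apply: sumr_ge0 => k _.
Qed.

Lemma lap_entry tau i j : (- tau *: laplacian w r) i j =
  - tau * ((deg w i `^ r)^-1 * ((i == j)%:R * deg w i - w i j)).
Proof. by rewrite !mxE. Qed.

Lemma sum_delta (i : 'I_m.+1) (x : R) : \sum_j (i == j)%:R * x = x.
Proof.
rewrite (bigD1 i) //= eqxx mul1r big1 ?addr0 //.
by move=> j /negPf ji; rewrite eq_sym ji mul0r.
Qed.

End Graph.

Local Close Scope classical_set_scope.
Unset Implicit Arguments.

Theorem theorem33 (R : realType) (n : nat) (w : 'I_n -> 'I_n -> R) (r : R)
  (eps tau : R) :
  (2 <= n)%N -> weighted_graph w -> 0 <= r <= 1 ->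
  0 < eps -> 0 <= tau <= eps ->
  let lam := tau / eps in
  (forall u : 'I_n -> R, in01 u -> 0 <= Hfun w r lam tau u) /\
  (forall (u beta : nat -> 'I_n -> R),
     in01 (u 0%N) ->
     (forall k : nat, inB (u k.+1) (beta k.+1) /\
        forall i, u k.+1 i - matvec (expm (- tau *: laplacian w r)) (u k) i
                  - lam * u k.+1 i + lam * meanV w r (u k.+1)
                = lam * beta k.+1 i - lam * meanV w r (beta k.+1)) ->
     forall k : nat,
       [/\ Hfun w r lam tau (u k.+1) <= Hfun w r lam tau (u k),
           Hfun w r lam tau (u k.+1) = Hfun w r lam tau (u k) <-> u k.+1 = u k
         & Hfun w r lam tau (u k) - Hfun w r lam tau (u k.+1)
             >= (1 - lam) * normV2 w r (fun i => u k.+1 i - u k i)]).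
Proof.
case: n w => [|m] w hn; first by [].
move=> hw /andP[r0 r1] heps /andP[tau0 taue] lm.
have m0 : (0 < m)%N by [].
pose dl := fun i => deg w i `^ r.
have dlpos : forall i, 0 < dl i by move=> i; apply: powR_gt0; exact: deg_gt0.
pose X := - tau *: laplacian w r.
pose A := Em X.
have hE : expm (- tau *: laplacian w r) = A.
  apply/matrixP => i j; rewrite !mxE; congr (limn _); apply/funext => N.
  rewrite es_entry; apply: eq_bigr => k _.
  have -> : mpow X k = X ^+ k.
    move: (nat_of_ord k) => q; by elim: q => [|q IH] //=; rewrite IH exprS.

  by rewrite mulrC.
have sX : symd dl X.
  move=> i j; rewrite /X !lap_entry /dl.
  have hi := dlpos i; have hj := dlpos j.
  rewrite /dl in hi hj.
  have e : forall x y : R, 0 < x -> x * (- tau * (x^-1 * y)) = - tau * y.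
    by move=> x y x0; field; rewrite gt_eqF.
  rewrite !e //.
  case: (eqVneq i j) => [->//|ne].
  have [ws _ _ _] := hw.
  by rewrite ws !mulr0n !mul0r.
have rX : forall i, \sum_j X i j = 0.
  move=> i; under eq_bigr do rewrite /X lap_entry.
  rewrite -mulr_sumr -mulr_sumr sumrB sum_delta subrr.
  by rewrite mulr0 mulr0.
have [ws wge0 _ _] := hw.
have nX : forall i j, i != j -> 0 <= X i j.
  move=> i j ne; rewrite /X lap_entry (negPf ne) mulr0n mul0r sub0r.
  rewrite !mulrN mulNr opprK; apply: mulr_ge0 => //; apply: mulr_ge0 => //.
  by rewrite invr_ge0; exact: ltW (dlpos i).
clearbody X.
have h2 : (2^-1 + 2^-1 : R) = 1 by field.
pose B := Em (2^-1 *: X).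
pose Bi := Em (- 2^-1 *: X).
have AB : A = B *m B.
  by rewrite /B -Em_add // -scalerDl h2 scale1r.
have BiB : Bi *m B = 1.
  rewrite /Bi /B -Em_add; last first.
    by rewrite -!scalemxAl -!scalemxAr !scalerA; congr (_ *: _); exact: mulrC.
  by rewrite -scalerDl addNr scale0r Em0.
have sXs : forall c, symd dl (c *: X).
  by move=> c i j; rewrite !mxE mulrCA sX mulrCA.
have sA : symd dl A := symd_Em sX.
have sB : symd dl B := symd_Em (sXs _).
have rA := rowsum_Em rX.
have nA : forall i j, 0 <= A i j.
  pose c := \sum_i `|X i i|.
  have hXc : X = (X + c%:M) + (- c)%:M by rewrite raddfN /= addrK.
  have nXc : forall i j, 0 <= (X + c%:M) i j.
    move=> i j; rewrite !mxE; case: (eqVneq i j) => [<-|ne].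
      have : `|X i i| <= c by rewrite /c (bigD1 i) //= lerDl; apply: sumr_ge0.
      have := ler_norm (- X i i); rewrite normrN mulr1n.
      lra.
    by rewrite mulr0n addr0; exact: nX.
  rewrite /A hXc Em_add; last by rewrite scalar_mxC.
  rewrite Em_scalar mul_mx_scalar => i j; rewrite mxE.
  apply: mulr_ge0; [exact: ltW (expR_gt0 _) | exact: nonneg_Em].
have Hle : forall u, ip dl u (mv A u) <= ip dl u u.
  by move=> u; apply: ip_le.
have Gd : forall d, ip dl d (mv A d) = ip dl (mv B d) (mv B d).
  by move=> d; rewrite AB mvM ip_selfadj.
have Gpos : forall d, ip dl d (mv A d) = 0 -> d = (fun=> 0).
  move=> d; rewrite Gd => /(ip_eq0 dlpos) hBd.
  rewrite -(mv1 d) -BiB mvM hBd; apply/funext => i.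
  by rewrite /mv big1 // => j _; rewrite mulr0.
have lm0 : 0 <= lm by rewrite /lm divr_ge0 // ltW.
have lm1 : lm <= 1 by rewrite /lm ler_pdivrMr // mul1r.
clearbody lm.
have HE : forall x, Hfun w r lm tau x =
    lm * ip dl x (fun i => 1 - x i) + ip dl x (fun i => x i - mv A x i).
  by move=> x; rewrite /Hfun hE.
split.
  move=> u hu; rewrite HE.
  have e : ip dl u (fun i => u i - mv A u i) = ip dl u u - ip dl u (mv A u).
    by rewrite /ip -sumrB; apply: eq_bigr => i _; ring.
  rewrite e; apply: addr_ge0; last by rewrite subr_ge0.
  apply: mulr_ge0 => //; apply: sumr_ge0 => i _; have /andP[h0 h1] := hu i.
  apply: mulr_ge0; [apply: mulr_ge0 => //; lra | exact: ltW (dlpos i)].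
move=> u beta hu0 hstep k.
have hv : in01 (u k) by case: k => [|k] //; case: (hstep k) => [[]].
case: (hstep k) => [[hu1 hB] hs].
rewrite hE in hs; rewrite !HE.
set v := u k in hv hs *; set u' := u k.+1 in hu1 hB hs *; set b := beta k.+1 in hB hs *.
set mu := meanV w r u' in hs *; set mb := meanV w r b in hs *.
pose d := fun i => u' i - v i.
have -> : normV2 w r (fun i => u' i - v i) = ip dl d d by [].
clearbody v u' b.
pose Stot := ip dl (fun=> 1) (fun=> 1).
have S0 : 0 < Stot.
  rewrite /Stot /ip (bigD1 ord0) //= !mul1r; apply: (lt_le_trans (dlpos ord0)).
  by rewrite lerDl; apply: sumr_ge0 => i _; rewrite !mul1r; exact: ltW (dlpos i).
have hmu : mu * Stot = ip dl u' (fun=> 1).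
  by rewrite /mu /meanV /massV divfK ?gt_eqF.
have hmb : mb * Stot = ip dl b (fun=> 1).
  by rewrite /mb /meanV /massV divfK ?gt_eqF.
clearbody mu mb.
have ha : forall i, mv A v i = (1 - lm) * u' i - lm * b i + (lm * mu + lm * mb).
  move=> i; have h0 : u' i - mv A v i - lm * u' i + lm * mu - (lm * b i - lm * mb) = 0.
    by rewrite hs subrr.
  by rewrite -[LHS]addr0 -h0; ring.
have hmass : ip dl d (fun=> 1) = 0.
  have e1 : ip dl (fun=> 1) (mv A v) = ip dl (fun=> 1) v by apply: ip_mass.
  have e2 : ip dl (fun=> 1) (mv A v) = (1 - lm) * ip dl u' (fun=> 1)
      - lm * ip dl b (fun=> 1) + (lm * mu + lm * mb) * Stot.
    rewrite /ip /Stot !mulr_sumr -sumrB -big_split /=; apply: eq_bigr => i _.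
    by rewrite ha; ring.
  have e3 : ip dl d (fun=> 1) = ip dl u' (fun=> 1) - ip dl (fun=> 1) v.
    by rewrite /ip -sumrB; apply: eq_bigr => i _; rewrite /d; ring.
  by rewrite e3 -e1 e2 [(lm * mu + lm * mb) * _]mulrDl -!mulrA hmu hmb; ring.
have mvu : forall i, mv A u' i = mv A v i + mv A d i.
  by move=> i; rewrite /mv -big_split; apply: eq_bigr => j _ /=; rewrite /d; ring.
have key : (lm * ip dl v (fun i => 1 - v i) + ip dl v (fun i => v i - mv A v i))
    - (lm * ip dl u' (fun i => 1 - u' i) + ip dl u' (fun i => u' i - mv A u' i))
  = (1 - lm) * ip dl d d + ip dl d (mv A d) - 2 * lm * ip dl d b
    + ((2 * (lm * mu + lm * mb) - lm) * ip dl d (fun=> 1)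
       + (ip dl v (mv A d) - ip dl (mv A v) d)).
  rewrite /ip !mulr_sumr -?sumrB -?big_split -?sumrB -?big_split -?sumrB -?big_split.
  apply: eq_bigr => i _ /=.
  by rewrite mvu ha /d; ring.
rewrite hmass mulr0 add0r (ip_selfadj v d sA) subrr addr0 in key.
have hdb : ip dl d b <= 0.
  rewrite /ip; apply: sumr_le0 => i _.
  have [hb0 hb1 hb2] := hB i.
  have /andP[v0 v1] := hv i; have /andP[u0 u1] := hu1 i.
  have dp := dlpos i.
  suff : (u' i - v i) * b i <= 0 by move=> h; rewrite /d; nra.
  have [e0|ne0] := eqVneq (u' i) 0.
    have := hb0 e0; rewrite e0; nra.
  have [e1|ne1] := eqVneq (u' i) 1.
    have := hb2 e1; rewrite e1; nra.
  have : 0 < u' i < 1 by rewrite !lt_neqAle eq_sym ne0 ne1 u0 u1.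
  by move/hb1 => ->; rewrite mulr0.
have hG : 0 <= ip dl d (mv A d) by rewrite Gd ip_ge0.
have hN : 0 <= ip dl d d by apply: ip_ge0.
have hQ : 0 <= - (2 * lm * ip dl d b).
  by rewrite -mulrN; apply: mulr_ge0; [apply: mulr_ge0 | rewrite oppr_ge0].
have h1N : 0 <= (1 - lm) * ip dl d d by apply: mulr_ge0 => //; rewrite subr_ge0.
split.
- lra.
- split => [heq|->//].
  have G0 : ip dl d (mv A d) = 0 by lra.
  have hd := Gpos d G0.
  apply/funext => i; have := congr1 (fun f => f i) hd; rewrite /d /= => /eqP.
  by rewrite subr_eq0 => /eqP.
- lra.
Qed.
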